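(* Let $K\ge1$, $N>0$, $P_{\max}>0$, and for $k=1,\dots,K$ let $a_k:=(\rho_{g,k}\rho_{r,kL})^2>0$ and $\Gamma_k=\frac{M a_k}{\sigma^2}c_b^2$ with $c_b=\frac{2^b}{\pi}\sin\frac{\pi}{2^b}$. Consider the problem $$\max_{\{p_k\},\{\tilde N_k\}}\ \min_{k\in\{1,\dots,K\}}\ \log_2\!\left(1+p_k\Gamma_k\tilde N_k^2\right)\quad\text{s.t.}\quad \sum_{k=1}^K p_k=P_{\max},\ \sum_{k=1}^K\tilde N_k=N,\ p_k\ge0,\ \tilde N_k\ge0.$$ Its optimal solution is $$\tilde N_k^*=\frac{\left(2a_k^{-1}\right)^{1/3}N}{\sum_{j=1}^K\left(2a_j^{-1}\right)^{1/3}},\qquad p_k^*=\frac{P_{\max}\left(\rho_{g,k}\rho_{r,kL}\tilde N_k^*\right)^{-2}}{\sum_{j=1}^K\left(\rho_{g,j}\rho_{r,jL}\tilde N_j^*\right)^{-2}},\quad k=1,\dots,K.$$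
   Context: Interpretation: a base station with $M$ antennas serves $K$ user clusters, cluster $k$ aided by a local IRS with $\tilde N_k$ elements (relaxed to a continuous value) with $b$-bit phase quantization; $p_k$ is the power allocated to the representative user $u_L^k$ of cluster $k$, $(\rho_{g,k}\rho_{r,kL})^2$ its concatenated BS–IRS–user path loss, $\sigma^2$ the noise power; under pure LoS channels and interference-free transmission its rate is $\log_2(1+p_k\Gamma_k\tilde N_k^2)$. *)

(* Defs.v *)
From HB Require Import structures.
From mathcomp Require Import all_boot all_order all_algebra.
From mathcomp Require Import all_classical all_reals all_analysis.
Set Implicit Arguments. Unset Strict Implicit. Unset Printing Implicit Defensive.
Import Order.TTheory GRing.Theory Num.Theory.
Local Open Scope ring_scope.

Section Defs.
Variable R : realType.

Definition log2 (x : R) : R := ln x / ln 2.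

Definition c_b (b : nat) : R := 2 ^+ b / pi * sin (pi / 2 ^+ b).

Definition Gamma (M : nat) (sigma2 : R) (b : nat) (a : R) : R :=
  M%:R * a / sigma2 * c_b b ^+ 2.

Definition min_over (n : nat) (f : 'I_n.+1 -> R) : R :=
  \big[Num.min/f ord0]_(k < n.+1) f k.

Definition min_rate (n : nat) (Gam p Nt : 'I_n.+1 -> R) : R :=
  min_over (fun k => log2 (1 + p k * Gam k * Nt k ^+ 2)).

Definition feasible (n : nat) (Pmax Ntot : R) (p Nt : 'I_n.+1 -> R) : Prop :=
  [/\ \sum_(k < n.+1) p k = Pmax, \sum_(k < n.+1) Nt k = Ntot,
      forall k, 0 <= p k & forall k, 0 <= Nt k].
End Defs.

(* Main.v *)
Require Import Defs.
From HB Require Import structures.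
From mathcomp Require Import all_boot all_order all_algebra.
From mathcomp Require Import all_classical all_reals all_analysis.
From mathcomp Require Import ring lra.
Import Order.TTheory GRing.Theory Num.Theory.
Local Open Scope ring_scope.

Lemma tangent (R : realType) (a y z : R) : 0 < a -> 0 < y -> 0 < z ->
  (a * z ^+ 2)^-1 - 2 * (y - z) / (a * z ^+ 3) <= (a * y ^+ 2)^-1.
Proof.
move=> a0 y0 z0; rewrite -subr_ge0.
have -> : (a * y ^+ 2)^-1 - ((a * z ^+ 2)^-1 - 2 * (y - z) / (a * z ^+ 3))
   = (z - y) ^+ 2 * (z + 2 * y) / (a * y ^+ 2 * z ^+ 3).
  by field; rewrite ?mulf_neq0 ?expf_neq0 ?gt_eqF.
apply: divr_ge0; last by apply: ltW; rewrite !mulr_gt0 ?exprn_gt0.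
by rewrite mulr_ge0 ?sqr_ge0 // ltW // addr_gt0 // mulr_gt0.
Qed.

Lemma sum_tangent (R : realType) n (a y z : 'I_n.+1 -> R) c :
  (forall k, 0 < a k) -> (forall k, 0 < y k) -> (forall k, 0 < z k) ->
  (forall k, a k * z k ^+ 3 = c) ->
  \sum_k y k = \sum_k z k ->
  \sum_k (a k * z k ^+ 2)^-1 <= \sum_k (a k * y k ^+ 2)^-1.
Proof.
move=> a0 y0 z0 hc hs.
have : \sum_k ((a k * z k ^+ 2)^-1 - 2 * (y k - z k) / c) <= \sum_k (a k * y k ^+ 2)^-1.
  apply: ler_sum => k _; rewrite -(hc k); exact: tangent.
rewrite sumrB -mulr_suml -mulr_sumr sumrB hs subrr mulr0 mul0r subr0; done.
Qed.

Lemma log2_le (R : realType) (x y : R) : 0 < x -> x <= y -> log2 x <= log2 y.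
Proof.
move=> x0 xy; rewrite /log2 ler_wpM2r //.
  by rewrite invr_ge0 ltW // ln_gt0 // ltr1n.
by rewrite ler_ln // posrE (lt_le_trans x0).
Qed.

Theorem proposition4 (R : realType) (n M b : nat) (sigma2 Pmax Ntot : R)
    (rho_g rho_r : 'I_n.+1 -> R) :
  (0 < M)%N -> (0 < b)%N -> 0 < sigma2 -> 0 < Pmax -> 0 < Ntot ->
  (forall k, 0 < (rho_g k * rho_r k) ^+ 2) ->
  let a := fun k => (rho_g k * rho_r k) ^+ 2 in
  let Gam := fun k => Gamma M sigma2 b (a k) in
  let Nstar := fun k =>
    (2 / a k) `^ (3^-1) * Ntot / \sum_(j < n.+1) (2 / a j) `^ (3^-1) in
  let pstar := fun k =>
    Pmax * (rho_g k * rho_r k * Nstar k) ^- 2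
      / \sum_(j < n.+1) (rho_g j * rho_r j * Nstar j) ^- 2 in
  feasible Pmax Ntot pstar Nstar /\
  forall p Nt : 'I_n.+1 -> R, feasible Pmax Ntot p Nt ->
    min_rate Gam p Nt <= min_rate Gam pstar Nstar.
Proof.
move=> hM hb hs hP hN ha a Gam Nstar pstar.
have a0 : forall k, 0 < a k by [].
pose s k := (2 / a k) `^ (3^-1 : R).
have s0 : forall k, 0 < s k by move=> k; apply: powR_gt0; rewrite divr_gt0.
pose S := \sum_(j < n.+1) s j.
have S0 : 0 < S.
  rewrite /S big_ord_recl; apply: (lt_le_trans (s0 ord0)).
  by rewrite lerDl sumr_ge0 // => i _; apply: ltW.
have hNs : forall k, Nstar k = s k * Ntot / S by [].
have N0 : forall k, 0 < Nstar k by move=> k; rewrite hNs divr_gt0 // mulr_gt0.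
have s3 : forall k, s k ^+ 3 = 2 / a k.
  move=> k; rewrite /s -powR_mulrn ?powR_ge0 // -powRrM mulVf ?powRr1 //.
    by rewrite ltW // divr_gt0.
have hc : forall k, a k * Nstar k ^+ 3 = 2 * Ntot ^+ 3 / S ^+ 3.
  move=> k; rewrite hNs !exprMn s3 exprVn; field.
  by rewrite !gt_eqF.
pose D := \sum_(j < n.+1) (a j * Nstar j ^+ 2)^-1.
have t0 : forall k, 0 < (a k * Nstar k ^+ 2)^-1.
  by move=> k; rewrite invr_gt0 mulr_gt0 // exprn_gt0.
have D0 : 0 < D.
  rewrite /D big_ord_recl; apply: (lt_le_trans (t0 ord0)).
  by rewrite lerDl sumr_ge0 // => i _; apply: ltW.
have hpst : forall k, pstar k = Pmax * (a k * Nstar k ^+ 2)^-1 / D.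
  move=> k; rewrite /pstar /D; congr (_ / _ / _); first by rewrite exprMn.
  by apply: eq_bigr => j _; rewrite exprMn.
split.
  split.
  - under eq_bigr do rewrite hpst.
    by rewrite -mulr_suml -mulr_sumr -/D mulfK // gt_eqF.
  - under eq_bigr do rewrite hNs.
    by rewrite -!mulr_suml -/S mulrAC divff ?mul1r // gt_eqF.
  - by move=> k; rewrite hpst divr_ge0 ?mulr_ge0 // ltW.
  - by move=> k; apply: ltW.
pose C := M%:R / sigma2 * c_b R b ^+ 2.
have C0 : 0 <= C by rewrite mulr_ge0 ?sqr_ge0 // divr_ge0 // ltW // .
have hG : forall k, Gam k = C * a k.
  by move=> k; rewrite /Gam /Gamma /C; ring.
pose T := Pmax * C / D.
have T0 : 0 <= T by apply: divr_ge0; [apply: mulr_ge0 => //; apply: ltW | apply: ltW].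
have hstar : forall k, pstar k * Gam k * Nstar k ^+ 2 = T.
  move=> k; rewrite hpst hG /T; field.
  by rewrite !gt_eqF.
have Hst : log2 (1 + T) <= min_rate Gam pstar Nstar.
  rewrite /min_rate /min_over; apply: le_bigmin => [|i _]; by rewrite hstar.
move=> p Nt [sp sN p0 Nt0].
suff [k hk] : exists k, p k * Gam k * Nt k ^+ 2 <= T.
  apply: le_trans Hst; apply: le_trans (bigmin_le _ k _) _.
  apply: log2_le; last by rewrite lerD2l.
  rewrite ltr_pwDl // mulr_ge0 ?sqr_ge0 // hG mulr_ge0 // mulr_ge0 // ltW //.
case: (boolP [exists k, Nt k == 0]) => [/existsP [k /eqP hk]|hne].
  by exists k; rewrite hk expr0n mulr0.
have Ntp : forall k, 0 < Nt k.
  move=> k; rewrite lt_neqAle Nt0 andbT eq_sym.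
  by apply: contra hne => hk; apply/existsP; exists k.
case: (boolP [exists k, p k * a k * Nt k ^+ 2 <= Pmax / D]) => [/existsP [k hk]|hne2].
  exists k; have -> : p k * Gam k * Nt k ^+ 2 = C * (p k * a k * Nt k ^+ 2) by rewrite hG; ring.
  have -> : T = C * (Pmax / D) by rewrite /T; ring.
  exact: ler_wpM2l.
exfalso.
have hlt : forall k, Pmax / D * (a k * Nt k ^+ 2)^-1 < p k.
  move=> k; have : ~~ (p k * a k * Nt k ^+ 2 <= Pmax / D).
    by apply: contra hne2 => hk; apply/existsP; exists k.
  rewrite -ltNge => hk.
  have pos : 0 < a k * Nt k ^+ 2 by rewrite mulr_gt0 // exprn_gt0.
  by rewrite ltr_pdivrMr // mulrA.
have key : D <= \sum_k (a k * Nt k ^+ 2)^-1.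
  apply: (@sum_tangent _ _ a Nt Nstar (2 * Ntot ^+ 3 / S ^+ 3)) => //.
  by rewrite sN; apply/esym; under eq_bigr do rewrite hNs; rewrite -!mulr_suml -/S mulrAC divff ?mul1r // gt_eqF.
have : Pmax / D * \sum_k (a k * Nt k ^+ 2)^-1 < Pmax.
  rewrite -{2}sp mulr_sumr; apply: ltr_sum => [|i _]; last exact: hlt.
  by apply/hasP; exists ord0; rewrite ?mem_index_enum.
rewrite ltNge => /negP; apply.
rewrite {1}(_ : Pmax = Pmax / D * D); last by rewrite divfK // gt_eqF.
apply: ler_wpM2l => //; apply: ltW; exact: divr_gt0.
Qed.
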